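(* Let $A \in \mathfrak t$, let $\Phi_{\mathfrak h} = \{\alpha \in \Phi_{\mathfrak g} : \alpha(A) = 0\}$, let $U = \bigcap_{\alpha \in \Phi_{\mathfrak h}} \ker(\alpha) \subseteq \mathfrak t$ (with $U = \mathfrak t$ if $\Phi_{\mathfrak h} = \varnothing$), and let $$\mathbf B = U \cap \bigcap_{\alpha \in \Phi_{\mathfrak g} \setminus \Phi_{\mathfrak h}} \bigl(\mathfrak t \setminus \ker(\alpha)\bigr) \subseteq \mathfrak t .$$ Then $\operatorname{Stab}_{W_{\mathfrak g}}(U) = \operatorname{Stab}_{W_{\mathfrak g}}(\mathbf B)$, and $(W_{\mathfrak g} A) \cap \mathbf B = \mathcal O_A$, where $\mathcal O_A$ is the orbit of $A$ under the group $\operatorname{Stab}_{W_{\mathfrak g}}(\mathbf B)$.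
   Context: $G$ is a connected complex reductive Lie group, $\mathfrak g = \mathrm{Lie}(G)$, $T \subseteq G$ a maximal torus, $\mathfrak t = \mathrm{Lie}(T)$, $\Phi_{\mathfrak g} \subseteq \mathfrak t^\vee$ the root system of $(\mathfrak g,\mathfrak t)$, and $W_{\mathfrak g} = N_G(T)/T$ the Weyl group, acting on $\mathfrak t$. For a subset $S \subseteq \mathfrak t$, the setwise stabiliser is $\operatorname{Stab}_{W_{\mathfrak g}}(S) = \{w \in W_{\mathfrak g} : w(S) \subseteq S\}$. *)

(* Defs.v *)
From HB Require Import structures.
From mathcomp Require Import all_boot all_order all_algebra.
Set Implicit Arguments. Unset Strict Implicit. Unset Printing Implicit Defensive.
Import Order.TTheory GRing.Theory Num.Theory.
Local Open Scope ring_scope.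

(* Model: t = 'cV[F]_n (Cartan subalgebra, dim n), t^vee = 'rV[F]_n,
   roots alpha : 'rV_n, coroots cor alpha : 'cV_n, pairing alpha(X) = (alpha *m X) 0 0.
   Weyl group = group generated by the root reflections s_alpha(X) = X - alpha(X) alpha^vee. *)

Section Defs.
Variables (F : numClosedFieldType) (n : nat).

Definition ev (a : 'rV[F]_n) (X : 'cV[F]_n) : F := (a *m X) 0 0.

Definition is_root_datum (Phi : seq 'rV[F]_n) (cor : 'rV[F]_n -> 'cV[F]_n) : Prop :=
  [/\ forall a, a \in Phi -> ev a (cor a) = 2,
      forall a b, a \in Phi -> b \in Phi -> b - ev b (cor a) *: a \in Phi &
      forall a b, a \in Phi -> b \in Phi ->
        cor (b - ev b (cor a) *: a) = cor b - ev a (cor b) *: cor a].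

Definition refl (a : 'rV[F]_n) (c : 'cV[F]_n) : 'M[F]_n := 1%:M - c *m a.

Definition weyl (Phi : seq 'rV[F]_n) (cor : 'rV[F]_n -> 'cV[F]_n) (w : 'M[F]_n) : Prop :=
  exists s : seq 'rV[F]_n, all (mem Phi) s /\
    w = foldr (fun a m => refl a (cor a) *m m) 1%:M s.

Definition stab (W : 'M[F]_n -> Prop) (S : 'cV[F]_n -> Prop) (w : 'M[F]_n) : Prop :=
  W w /\ forall X, S X -> S (w *m X).

Definition Phi_h (Phi : seq 'rV[F]_n) (A : 'cV[F]_n) : seq 'rV[F]_n :=
  [seq a <- Phi | ev a A == 0].

Definition Uset (Phi : seq 'rV[F]_n) (A : 'cV[F]_n) (X : 'cV[F]_n) : Prop :=
  forall a, a \in Phi_h Phi A -> ev a X = 0.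

Definition Bset (Phi : seq 'rV[F]_n) (A : 'cV[F]_n) (X : 'cV[F]_n) : Prop :=
  Uset Phi A X /\ forall a, a \in Phi -> a \notin Phi_h Phi A -> ev a X != 0.

End Defs.

(* Main.v *)
Require Import Defs.
From mathcomp Require Import all_boot all_order all_algebra.
Import GRing.Theory Num.Theory.
Local Open Scope ring_scope.
Set Implicit Arguments.

Section Aux.
Variables (F : numClosedFieldType) (n : nat).
Implicit Types (a b : 'rV[F]_n) (c : 'cV[F]_n) (X Y : 'cV[F]_n) (w : 'M[F]_n).

Lemma evM a w X : ev a (w *m X) = ev (a *m w) X.
Proof. by rewrite /ev mulmxA. Qed.
Lemma evD a X Y : ev a (X + Y) = ev a X + ev a Y.
Proof. by rewrite /ev mulmxDr mxE. Qed.
Lemma evZ a t X : ev a (t *: X) = t * ev a X.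
Proof. by rewrite /ev -scalemxAr mxE. Qed.

Lemma refl_row b a c : b *m refl a c = b - ev b c *: a.
Proof.
have e : b *m c = (ev b c)%:M := mx11_scalar _.
by rewrite /refl mulmxBr mulmx1 mulmxA e mul_scalar_mx.
Qed.

Lemma refl_invol a c : ev a c = 2 -> refl a c *m refl a c = 1%:M.
Proof.
move=> H.
have e : a *m c = (ev a c)%:M := mx11_scalar _.
have e2 : c *m a *m (c *m a) = 2 *: (c *m a).
  by rewrite mulmxA -(mulmxA c a c) e H mul_mx_scalar -scalemxAl.
rewrite /refl mulmxBl mul1mx mulmxBr mulmx1 e2 scaler_nat mulr2n.
set x := c *m a; rewrite opprB addrA.
by rewrite -addrA addrK subrK.
Qed.

Lemma weyl_inv Phi cor w : is_root_datum Phi cor -> weyl Phi cor w ->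
  exists w', w *m w' = 1%:M.
Proof.
case=> H2 _ _ [s [Hs ->]]; elim: s Hs => [|a s IH] /=.
  by move=> _; exists 1%:M; rewrite mulmx1.
case/andP=> Ha /IH [w' Hw']; exists (w' *m refl a (cor a)).
by rewrite -mulmxA (mulmxA _ w') Hw' mul1mx refl_invol // H2.
Qed.

Lemma weyl_row Phi cor w b : is_root_datum Phi cor -> weyl Phi cor w ->
  b \in Phi -> b *m w \in Phi.
Proof.
case=> _ Hcl _ [s [Hs ->]]; elim: s b Hs => [|a s IH] b /=.
  by move=> _; rewrite mulmx1.
case/andP=> Ha Hs Hb; rewrite mulmxA refl_row; apply: IH => //.
exact: Hcl.
Qed.

Lemma inPh Phi A a : (a \in Phi_h Phi A) = (ev a A == 0) && (a \in Phi).
Proof. by rewrite /Phi_h mem_filter. Qed.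

Lemma good_t Phi A X : Uset Phi A X ->
  exists t : nat, (0 < t)%N /\ Bset Phi A (A + t%:R *: X).
Proof.
move=> UX.
pose bad := [seq - ev a A / ev a X | a <- Phi].
pose N := size Phi.
case: (boolP (all (fun k : nat => (k%:R : F) \in bad) (iota 1 N.+1))) => [Hall|].
  have U1 : uniq [seq (k%:R : F) | k <- iota 1 N.+1].
    rewrite map_inj_uniq ?iota_uniq // => x y /eqP.
    by rewrite eqr_nat => /eqP.
  have := uniq_leq_size U1.
  have sub : {subset [seq (k%:R : F) | k <- iota 1 N.+1] <= bad}.
    by move=> x /mapP [k Hk ->]; exact: (allP Hall).
  move/(_ _ sub); by rewrite !size_map size_iota ltnn.
case/allPn=> k; rewrite mem_iota => /andP [k1 _] Hk.
exists k; split => //; split.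
  move=> a Ha; rewrite evD evZ UX // mulr0 addr0.
  by move: Ha; rewrite inPh => /andP [/eqP].
move=> a Ha Hn.
have eA : ev a A != 0 by move: Hn; rewrite inPh Ha andbT.
rewrite evD evZ; case: (eqVneq (ev a X) 0) => [->|nz]; first by rewrite mulr0 addr0.
apply/negP; rewrite addr_eq0 => /eqP h.
move: Hk; apply/negP; rewrite negbK.
have -> : (k%:R : F) = - ev a A / ev a X by rewrite h opprK mulfK.
exact: map_f.
Qed.

End Aux.

Theorem lemma2p1 (F : numClosedFieldType) (n : nat)
  (Phi : seq 'rV[F]_n) (cor : 'rV[F]_n -> 'cV[F]_n)
  (HPhi : is_root_datum Phi cor) (A : 'cV[F]_n) :
  let W := weyl Phi cor in
  let U := Uset Phi A in
  let B := Bset Phi A in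
  (forall w, stab W U w <-> stab W B w) /\
  (forall Y, ((exists w, W w /\ Y = w *m A) /\ B Y) <->
             (exists w, stab W B w /\ Y = w *m A)).
Proof.
move=> W U B.
have UA : U A by move=> a; rewrite inPh => /andP [/eqP].
have BA : B A.
  split => // a Ha; rewrite inPh Ha andbT //.
have P1 : forall w, stab W U w <-> stab W B w.
  move=> w; split => [[Ww SU]|[Ww SB]]; split => //.
  - have [w' Hw'] := weyl_inv HPhi Ww.
    have perm_h : forall a, a \in Phi -> a *m w \in Phi_h Phi A -> a \in Phi_h Phi A.
      move=> a Ha Hah.
      pose s := undup (Phi_h Phi A).
      have finj : injective (fun c : 'rV[F]_n => c *m w).
        move=> c d /= E.
        by rewrite -(mulmx1 c) -Hw' mulmxA E -mulmxA Hw' mulmx1.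
      have sub : {subset [seq c *m w | c <- s] <= s}.
        move=> x /mapP [c]; rewrite mem_undup inPh => /andP [/eqP hc Hc] ->.
        rewrite mem_undup inPh (weyl_row _ HPhi Ww Hc) andbT.
        by rewrite -evM; apply/eqP; apply: (SU A UA); rewrite inPh hc eqxx.
      have [_ eqs] := uniq_min_size (etrans (map_inj_uniq finj s) (undup_uniq _)) sub
                         (eq_leq (esym (size_map _ _))).
      have : a *m w \in s by rewrite mem_undup.
      rewrite -eqs => /mapP [c Hc /finj ->].
      by rewrite -mem_undup.
    move=> X [UX BX]; split; first exact: SU.
    move=> a Ha Hn; rewrite evM.
    have Haw := weyl_row _ HPhi Ww Ha.
    case: (boolP (a *m w \in Phi_h Phi A)) => [h|h]; last exact: BX.
    by rewrite (perm_h a Ha h) in Hn.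
  - move=> X UX c Hc.
    have [t [t0 Bt]] := good_t UX.
    have [U1 _] := SB _ Bt.
    have := U1 c Hc; rewrite mulmxDr evD.
    have [U2 _] := SB _ BA; rewrite (U2 c Hc) add0r -scalemxAr evZ.
    move/eqP; rewrite mulf_eq0 pnatr_eq0 => /orP [/eqP t00|/eqP //].
    by rewrite t00 in t0.
split => // Y; split.
  move=> [[w [Ww ->]] BY]; exists w; split => //; apply/P1; split => //.
  move=> X UX c Hc; rewrite evM; apply: UX.
  rewrite inPh (weyl_row _ HPhi Ww) ?andbT; last by move: Hc; rewrite inPh => /andP [].
  by rewrite -evM (proj1 BY c Hc).
move=> [w [[Ww SB] ->]]; split; first by exists w.
exact: SB.
Qed.
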